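(* Let $V_1$ and $V_2$ be real vector spaces of dimensions $d_1$ and $d_2$, let $U\subseteq V_1$ and $V\subseteq V_2$ be relatively compact open subsets, let $R_1,R_2>0$ and $0<\varepsilon\leq R_1^{d_1}R_2^{d_2}$, and define $$U\times_{R_1,R_2,\varepsilon}V:=\{(\alpha u,\beta v)\,;\,u\in U,\ v\in V,\ \alpha,\beta\in\mathbb{R},\ |\alpha|\leq R_1,\ |\beta|\leq R_2,\ |\alpha^{d_1}\beta^{d_2}|\leq\varepsilon\}.$$ If $U$ and $V$ are balanced, then $$U\times_{R_1,R_2,\varepsilon}V=\{(\alpha u,\beta v)\,;\,u\in U,\ v\in V,\ \alpha,\beta\in\mathbb{R},\ |\alpha|\leq R_1,\ |\beta|\leq R_2,\ |\alpha^{d_1}\beta^{d_2}|=\varepsilon\}.$$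
   Context: A subset $U$ of a real vector space is balanced if $\alpha U\subseteq U$ for all real $\alpha$ with $|\alpha|\leq 1$. *)

(* Defs.v *)
From HB Require Import structures.
From mathcomp Require Import all_boot all_order all_algebra.
From mathcomp Require Import all_classical all_reals all_analysis.
Set Implicit Arguments. Unset Strict Implicit. Unset Printing Implicit Defensive.
Import Order.TTheory GRing.Theory Num.Theory.
Import numFieldNormedType.Exports.
Local Open Scope classical_set_scope.
Local Open Scope ring_scope.

Definition balanced (R : realType) (n : nat) (U : set 'rV[R]_n) : Prop :=
  forall (a : R) (u : 'rV[R]_n), `|a| <= 1 -> U u -> U (a *: u).

Definition rel_compact (R : realType) (n : nat) (U : set 'rV[R]_n) : Prop :=
  compact (closure U).

Definition twisted_prod (R : realType) (d1 d2 : nat)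
  (U : set 'rV[R]_d1) (V : set 'rV[R]_d2) (R1 R2 : R) (P : R -> Prop)
  : set ('rV[R]_d1 * 'rV[R]_d2) :=
  [set p | exists (u : 'rV[R]_d1) (v : 'rV[R]_d2) (a b : R),
     [/\ U u, V v, `|a| <= R1, `|b| <= R2 &
         P `|a ^+ d1 * b ^+ d2| /\ p = (a *: u, b *: v)]].

(* Main.v *)
Require Import Defs.
From HB Require Import structures.
From mathcomp Require Import all_boot all_order all_algebra.
From mathcomp Require Import all_classical all_reals all_analysis.
From mathcomp Require Import ring lra.
Import Order.TTheory GRing.Theory Num.Theory.
Import numFieldNormedType.Exports.
Local Open Scope classical_set_scope.
Local Open Scope ring_scope.
Lemma contlin (R : realType) (p q : R) : continuous (fun l : R => p + l * q).
Proof.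
move=> x; apply: cvgD; first exact: cvg_cst.
by apply: cvgM; [exact: cvg_id|exact: cvg_cst].
Qed.
Lemma contX (R : realType) (g : R -> R) n : continuous g -> continuous (fun l => g l ^+ n).
Proof.
move=> cg; elim: n => [|n IH] x.
  by under eq_fun do rewrite expr0; exact: cst_continuous.
under eq_fun do rewrite exprS.
by apply: cvgM; [exact: cg|exact: IH].
Qed.
Lemma cont (R : realType) (p q r s : R) (d1 d2 : nat) :
  continuous (fun l : R => (p + l * q) ^+ d1 * (r + l * s) ^+ d2).
Proof.
move=> x; have h1 := @contX R _ d1 (contlin R p q) x; have h2 := @contX R _ d2 (contlin R r s) x.
exact: (cvgM h1 h2).
Qed.
Lemma scal (R : realType) (x a : R) : `|a| <= x -> x * (a / x) = a.
Proof.
move=> h; have [xz|nz] := eqVneq x 0.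
  by move: h; rewrite xz normr_le0 => /eqP ->; rewrite !(mul0r, mulr0).
by rewrite mulrC divfK.
Qed.
Lemma nrm (R : realType) (x a : R) : `|a| <= x -> `|a / x| <= 1.
Proof.
move=> h; have [->|nz] := eqVneq x 0; first by rewrite invr0 mulr0 normr0.
have xp : 0 < x by rewrite lt_neqAle eq_sym nz /= (le_trans _ h).
by rewrite normrM normfV (gtr0_norm xp) ler_pdivrMr // mul1r.
Qed.

Theorem mainTheorem5 (R : realType) (d1 d2 : nat)
  (U : set 'rV[R]_d1) (V : set 'rV[R]_d2) (R1 R2 eps : R) :
  open U -> open V -> rel_compact U -> rel_compact V ->
  0 < R1 -> 0 < R2 -> 0 < eps -> eps <= R1 ^+ d1 * R2 ^+ d2 ->
  balanced U -> balanced V ->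
  twisted_prod U V R1 R2 (fun t => t <= eps) =
  twisted_prod U V R1 R2 (fun t => t = eps).
Proof.
move=> _ _ _ _ R1p R2p epsp epsle bU bV.
apply/seteqP; split => p; last first.
  by move=> [u [v [a [b [Uu Vv Ha Hb [He Hp]]]]]]; exists u, v, a, b; split => //; split => //; rewrite He.
move=> [u [v [a [b [Uu Vv Ha Hb [He ->]]]]]].
pose f := fun l : R => (`|a| + l * (R1 - `|a|)) ^+ d1 * (`|b| + l * (R2 - `|b|)) ^+ d2.
have f0 : f 0 <= eps by rewrite /f !mul0r !addr0 -!normrX -normrM.
have f1 : f 1 = R1 ^+ d1 * R2 ^+ d2 by rewrite /f !mul1r; congr (_ ^+ _ * _ ^+ _); ring.
have [c /andP [c0 c1] fc] : exists2 c, c \in `[0, 1] & f c = eps.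
  apply: IVT => //.

    exact: continuous_subspaceT (cont _ _ _ _ _ _ _).
  rewrite f1 ge_min f0 le_max epsle orbT //.
move: c0 c1; rewrite !bnd_simp => c0 c1.
set x := `|a| + c * (R1 - `|a|).
set y := `|b| + c * (R2 - `|b|).
have xa : `|a| <= x by rewrite /x lerDl mulr_ge0 // subr_ge0.
have yb : `|b| <= y by rewrite /y lerDl mulr_ge0 // subr_ge0.
have xR : x <= R1.
  rewrite /x -subr_ge0; have -> : R1 - (`|a| + c * (R1 - `|a|)) = (1 - c) * (R1 - `|a|) by ring.
  by rewrite mulr_ge0 // subr_ge0.
have yR : y <= R2.
  rewrite /y -subr_ge0; have -> : R2 - (`|b| + c * (R2 - `|b|)) = (1 - c) * (R2 - `|b|) by ring.
  by rewrite mulr_ge0 // subr_ge0.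
have x0 : 0 <= x := le_trans (normr_ge0 _) xa.
have y0 : 0 <= y := le_trans (normr_ge0 _) yb.
exists ((a / x) *: u), ((b / y) *: v), x, y; split.
- exact: bU (@nrm R x a xa) Uu.
- exact: bV (@nrm R y b yb) Vv.
- by rewrite ger0_norm.
- by rewrite ger0_norm.
split; first by rewrite ger0_norm ?mulr_ge0 ?exprn_ge0.
by rewrite !scalerA (@scal R x a xa) (@scal R y b yb).
Qed.
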